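(* Assume Hypothesis C. Let $L$ be a labeling and $\pi$ the priority rule keyed to $L$. Let $\tilde q(\cdot,\cdot)$ and $\tilde r(\cdot)$ be the finalized data obtained by running the Triangularizer on every bandit in accord with $L$, and define the $S\times S$ matrix $\tilde Q^{\pi}$ and the vector $\tilde R^{\pi}$ by $\tilde Q^{\pi}(s,t)=\tilde q(s_{\pi(s)},j)$ if $t=s_{\setminus\pi(s)}\cup\{j\}$ for some $j\in N_{\pi(s)}$ and $\tilde Q^{\pi}(s,t)=0$ otherwise, and $\tilde R^{\pi}(s)=\tilde r(s_{\pi(s)})$. Then $I-\tilde Q^{\pi}$ is invertible, and $\tilde V^{\pi}:=(I-\tilde Q^{\pi})^{-1}\tilde R^{\pi}$, the unique solution of $\tilde V^{\pi}=\tilde R^{\pi}+\tilde Q^{\pi}\tilde V^{\pi}$, satisfies $\tilde V^{\pi}=V^{\pi}$.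
   Context: There are $K$ bandits with pairwise disjoint finite nonempty state sets $N_1,\dots,N_K$; $N=N_1\cup\dots\cup N_K$; $b(j)$ is the $k$ with $j\in N_k$. Bandit $k$ has real transition rates $q(i,j)$ ($i,j\in N_k$) forming $q^k$ and real rewards $r(i)$ forming $r^k$. A multi-state $s$ contains exactly one state $s_k$ of each $N_k$; $S$ is the set of multi-states; $s_{\setminus k}=s\setminus\{s_k\}$. A stationary nonrandomized policy is a map $\delta:S\to\{1,\dots,K\}$. For such $\delta$, $Q^{\delta}(s,t)=q(s_{\delta(s)},j)$ if $t=s_{\setminus\delta(s)}\cup\{j\}$ with $j\in N_{\delta(s)}$, else $0$; $R^{\delta}(s)=r(s_{\delta(s)})$; $V^{\delta}=(I-Q^{\delta})^{-1}R^{\delta}$. A matrix is transient if its powers tend to $0$ entrywise. Hypothesis C: each $q^k$ is entrywise nonnegative and transient, and at least one of the following holds: (RN) each $q^k$ is substochastic ($\sum_{j\in N_k}q(i,j)\le1$); (RA) $r(i)\le0$ for all $i\in N$; (RS) $r(i)\ge0$ for all $i\in N$. (Under Hypothesis C each $Q^{\delta}$ is transient, so $V^{\delta}$ is well defined.) A labeling is an injective map $L:N\cup\{0\}\to\{1,\dots,|N|+1\}$ with $L(0)=|N|+1$; the priority rule keyed to $L$ is $\pi(s)=\arg\min\{L(s_k):1\le k\le K\}$. Triangularizer for bandit $k$ in accord with $L$: start with the tableau $[(I-q^k),r^k]$ and $M=N_k$; at each stage write the current tableau as $[(I-q),r]$. While $M\neq\emptyset$: let $i\in M$ minimize $L(i)$;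 multiply row $i$ by $1/[1-q(i,i)]$; for each $j\in M\setminus\{i\}$ replace row $j$ by itself plus $q(j,i)$ (current value) times the updated row $i$; remove $i$ from $M$. The final tableau is written $[(I-\tilde q^k),\tilde r^k]$; its entries are the finalized data $\tilde q(i,j)$, $\tilde r(i)$. *)

(* Defs.v *)
(* Scalars: any archimedean ordered field (covers the reals). *)
From HB Require Import structures.
From mathcomp Require Import all_boot all_order all_algebra.
Set Implicit Arguments. Unset Strict Implicit. Unset Printing Implicit Defensive.
Import Order.TTheory GRing.Theory Num.Theory.
Local Open Scope ring_scope.

Section Bandits.
Variable R : archiRealFieldType.

Definition transient (n : nat) (A : 'M[R]_n) : Prop :=
  forall (i j : 'I_n) (eps : R), 0 < eps ->
    exists N0 : nat, forall m : nat, (N0 <= m)%N -> `|(A ^+ m) i j| < eps.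

Variable T : finType.

Definition restr_mx (D : {set T}) (q : T -> T -> R) : 'M[R]_#|D| :=
  \matrix_(a, c) q (enum_val (A := mem D) a) (enum_val (A := mem D) c).

(* State: (M, A, r) where [A, r] is the current tableau [(I - q), r].   *)
Definition tri_stage (L : T -> nat)
    (st : {set T} * (T -> T -> R) * (T -> R)) :
    {set T} * (T -> T -> R) * (T -> R) :=
  let: (M, A, r) := st in
  match [pick i in M | [forall j in M, (L i <= L j)%N]] with
  | None => st
  | Some i =>
      let c := A i i in                      (* = 1 - q(i,i) *)
      let Ai := fun x => A i x / c in
      let ri := r i / c in
      (* for j <> i, the current q(j,i) equals - A j i *)
      let A' := fun j x => if j == i then Ai x
                 else if j \in M then A j x + (- A j i) * Ai x else A j x in
      let r' := fun j => if j == i then ri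
                 else if j \in M then r j + (- A j i) * ri else r j in
      (M :\ i, A', r')
  end.

(* Run the triangularizer on the state set D with data q, r, labels L.
   Returns the final tableau [(I - qt), rt] (entries meaningful on D). *)
Definition triangularize (L : T -> nat) (D : {set T})
    (q : T -> T -> R) (r : T -> R) : (T -> T -> R) * (T -> R) :=
  let A0 := fun x y => (x == y)%:R - q x y in
  let: (_, A, rv) := iter #|D| (tri_stage L) (D, A0, r) in (A, rv).

End Bandits.

Section Multi.
Variable R : archiRealFieldType.
Variables (K : nat) (N : finType) (b : N -> 'I_K).

Definition bandit_states (k : 'I_K) : {set N} := [set i | b i == k].

Definition multistates : {set {ffun 'I_K -> N}} :=
  [set s : {ffun 'I_K -> N} | [forall k, b (s k) == k]].

Notation msv a := (enum_val (A := mem multistates) a).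

Definition polQ (qf : N -> N -> R) (delta : {ffun 'I_K -> N} -> 'I_K) :
    'M[R]_#|multistates| :=
  \matrix_(a, c)
    let s := msv a in let t := msv c in let k := delta s in
    if [forall k', (k' != k) ==> (t k' == s k')] then qf (s k) (t k) else 0.

Definition polR (rf : N -> R) (delta : {ffun 'I_K -> N} -> 'I_K) :
    'cV[R]_#|multistates| :=
  \col_a rf (msv a (delta (msv a))).

Definition polV (qf : N -> N -> R) (rf : N -> R)
    (delta : {ffun 'I_K -> N} -> 'I_K) : 'cV[R]_#|multistates| :=
  invmx (1%:M - polQ qf delta) *m polR rf delta.

(* labeling: injective L : N u {0} -> {1..|N|+1}, L(0) = |N|+1;
   0 is encoded as None *)
Definition labeling (L : option N -> nat) : Prop :=
  injective L /\ (forall x, (1 <= L x <= #|N|.+1)%N) /\ L None = #|N|.+1.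

(* priority rule keyed to L (k0 is only a default needed by arg min) *)
Definition priority (L : option N -> nat) (k0 : 'I_K)
    (s : {ffun 'I_K -> N}) : 'I_K :=
  [arg min_(k < k0) L (Some (s k))]%N.

Definition fin_q (L : option N -> nat) (q : N -> N -> R) (r : N -> R)
    (i j : N) : R :=
  (i == j)%:R -
  (triangularize (fun x => L (Some x)) (bandit_states (b i)) q r).1 i j.

Definition fin_r (L : option N -> nat) (q : N -> N -> R) (r : N -> R)
    (i : N) : R :=
  (triangularize (fun x => L (Some x)) (bandit_states (b i)) q r).2 i.

Definition hypC (q : N -> N -> R) (r : N -> R) : Prop :=
  (forall i j, b i = b j -> 0 <= q i j) /\
  (forall k, transient (restr_mx (bandit_states k) q)) /\
  ( (forall i, \sum_(j | b j == b i) q i j <= 1)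
    \/ (forall i, r i <= 0)
    \/ (forall i, 0 <= r i) ).

End Multi.

(* Main.v *)
Require Import Defs.
From HB Require Import structures.
From mathcomp Require Import all_boot all_order all_algebra.
From mathcomp Require Import ring lra zify.
From Stdlib Require Import ClassicalEpsilon.
Set Implicit Arguments. Unset Strict Implicit. Unset Printing Implicit Defensive.
Import Order.TTheory GRing.Theory Num.Theory.
Local Open Scope ring_scope.

Section Tri.
Variable R : archiRealFieldType.
Variable T : finType.
Variable L : T -> nat.
Hypothesis Linj : injective L.

Lemma stage_spec (M : {set T}) (A : T -> T -> R) (rv : T -> R) :
  M != set0 ->
  exists2 i, i \in M & (forall j, j \in M -> (L i <= L j)%N) /\
    tri_stage L (M, A, rv) =
    (M :\ i,
     (fun j x => if j == i then A i x / A i i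
                 else if j \in M then A j x + (- A j i) * (A i x / A i i) else A j x),
     (fun j => if j == i then rv i / A i i
                 else if j \in M then rv j + (- A j i) * (rv i / A i i) else rv j)).
Proof.
move=> Mn0; rewrite /tri_stage; case: pickP => [i /andP[iM /forallP H]|H].
  exists i => //; split => // j jM; by move: (H j); rewrite jM.
exfalso; case/set0Pn: Mn0 => x0 x0M.
case: (arg_minnP L x0M) => i iM imin.
move: (H i) => /=. rewrite (_ : (i \in M) = true) //=. move/negbT/negP; apply; apply/forall_inP => j jM; exact: imin.

Qed.

Lemma stage_empty (A : T -> T -> R) (rv : T -> R) :
  tri_stage L (set0, A, rv) = (set0, A, rv).
Proof. by rewrite /tri_stage; case: pickP => [i /andP[]|]; rewrite ?inE. Qed.

Variable D : {set T}.
Variable u : T -> R.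
Hypothesis upos : forall x, x \in D -> 0 < u x.

Definition Inv (M : {set T}) (A : T -> T -> R) :=
 [/\ M \subset D,
     forall x, x \in D -> x \notin M -> A x x = 1 /\
        forall y, y \in D -> (L y < L x)%N -> A x y = 0,
     forall j y, j \in M -> y \in D -> y \notin M -> A j y = 0,
     forall j y, j \in M -> y \in M -> y != j -> A j y <= 0 &
     forall j, j \in M -> 0 < \sum_(y in M) A j y * u y].

Lemma sum_split_i (M : {set T}) i (f : T -> R) : i \in M ->
  \sum_(y in M) f y = f i + \sum_(y in M :\ i) f y.
Proof.
by move=> iM; rewrite (big_setD1 i).
Qed.

Lemma Inv_step M A rv M' A' rv' : Inv M A -> M != set0 ->
  tri_stage L (M, A, rv) = (M', A', rv') ->
  Inv M' A' /\ #|M'| = #|M|.-1.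
Proof.
move=> [MD I2 I3 I4 I5] Mn0.
case: (stage_spec A rv Mn0) => i iM [imin ->] [<- <- _].
have iD : i \in D by apply: (subsetP MD).
have cpos : 0 < A i i.
  move: (I5 i iM); rewrite (sum_split_i _ iM) => H.
  have : \sum_(y in M :\ i) A i y * u y <= 0.
    rewrite -oppr_ge0 -sumrN; apply: sumr_ge0 => y; rewrite !inE => /andP[yi yM].
    rewrite oppr_ge0; apply: mulr_le0_ge0; first by apply: I4.
    by apply/ltW/upos; apply: (subsetP MD).
  move=> H2; have : 0 < A i i * u i by lra.
  by rewrite pmulr_lgt0 // upos.
have c0 : A i i != 0 by rewrite gt_eqF.
split; last by rewrite (cardsD1 i M) iM.
split.
- by apply: subset_trans MD; apply: subD1set.
- move=> x xD; rewrite !inE negb_and negbK => /orP[/eqP->|xM].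
    rewrite eqxx mulfV //; split => // y yD Lyi.
    case: (boolP (y \in M)) => yM; first by move: (imin y yM); rewrite leqNgt Lyi.
    by rewrite (I3 i y iM yD yM) mul0r.
  have xi : x != i by apply: contraNneq xM => ->.
  by rewrite (negbTE xi) (negbTE xM); apply: I2.
- move=> j y; rewrite !inE => /andP[ji jM] yD; rewrite negb_and negbK => yc.
  rewrite (negbTE ji) jM.
  case/orP: yc => [/eqP->|yM]; first by rewrite mulfV // mulr1 addrN.
  by rewrite (I3 j y jM yD yM) (I3 i y iM yD yM) mul0r mulr0 addr0.
- move=> j y; rewrite !inE => /andP[ji jM] /andP[yi yM] yj.
  rewrite (negbTE ji) jM.
  have h1 := I4 j y jM yM yj.
  have h2 : 0 <= - A j i by rewrite oppr_ge0; apply: I4 => //; rewrite eq_sym.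
  have h3 : A i y / A i i <= 0.
    by rewrite pmulr_lle0 ?invr_gt0 //; apply: I4.
  have := mulr_ge0_le0 h2 h3; lra.
- move=> j; rewrite !inE => /andP[ji jM].
  rewrite (negbTE ji) jM.
  have Sj := I5 j jM; have Si := I5 i iM.
  rewrite (sum_split_i _ iM) in Sj; rewrite (sum_split_i _ iM) in Si.
  set Xj := \sum_(y in M :\ i) A j y * u y in Sj.
  set Xi := \sum_(y in M :\ i) A i y * u y in Si.
  rewrite (eq_bigr (fun y => A j y * u y + (- A j i / A i i) * (A i y * u y)));
    last by move=> y _; field.
  rewrite big_split /= -mulr_sumr -/Xj -/Xi.
  have hA : 0 <= - A j i / A i i.
    by rewrite divr_ge0 ?(ltW cpos) // oppr_ge0; apply: I4 => //; rewrite eq_sym.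
  have h1 : 0 <= (- A j i / A i i) * (A i i * u i + Xi) by rewrite mulr_ge0 // ltW.
  have h2 : (- A j i / A i i) * (A i i * u i + Xi) = - A j i * u i + (- A j i / A i i) * Xi.
    by field.
  lra.
Qed.

Definition EqInv (v : T -> R) (th : nat) (A : T -> T -> R) (rv : T -> R) :=
  forall x, x \in D -> (L x <= th)%N -> \sum_(z in D) A x z * v z = rv x.

Lemma Eq_step v th (M : {set T}) A rv M' A' rv' : M \subset D -> EqInv v th A rv ->
  tri_stage L (M, A, rv) = (M', A', rv') -> M' \subset D /\ EqInv v th A' rv'.
Proof.
move=> MD H.
have [->|Mn0] := eqVneq M set0.
  by rewrite stage_empty => -[<- <- <-]; split => //; apply: sub0set.
case: (stage_spec A rv Mn0) => i iM [imin ->] [<- <- <-].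
have iD : i \in D by apply: (subsetP MD).
split; first by apply: subset_trans MD; apply: subD1set.
move=> x xD Lx.
have [xi|xi] := eqVneq x i.
  subst x.
  rewrite -(H i iD Lx) mulr_suml; apply: eq_bigr => z _; by rewrite mulrAC.
case: (boolP (x \in M)) => xM.
  have Li : (L i <= th)%N by apply: leq_trans (imin x xM) Lx.
  rewrite -(H x xD Lx) -(H i iD Li) mulr_suml mulr_sumr -big_split.
  by apply: eq_bigr => z _ /=; ring.
by apply: H.
Qed.

Section Iter.
Variables (q : T -> T -> R) (r : T -> R).
Hypothesis qnn : forall x y, x \in D -> y \in D -> 0 <= q x y.
Hypothesis ustr : forall x, x \in D -> \sum_(y in D) q x y * u y < u x.
Let A0 := fun x y : T => (x == y)%:R - q x y.

Lemma Inv0 : Inv D A0.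
Proof.
split => //.
- by move=> x ->.
- by move=> j y _ ->.
- move=> j y jD yD yj; rewrite /A0 eq_sym (negbTE yj) sub0r oppr_le0; exact: qnn.
- move=> j jD.
  have -> : \sum_(y in D) A0 j y * u y = u j - \sum_(y in D) q j y * u y.
    rewrite (eq_bigr (fun y => (j == y)%:R * u y - q j y * u y)); last first.
      by move=> y _; rewrite /A0 mulrBl.
    rewrite big_split sumrN /= (big_setD1 j) //= eqxx mul1r big1 ?addr0 // => y.
    by rewrite !inE => /andP[yj _]; rewrite eq_sym (negbTE yj) mul0r.
  by rewrite subr_gt0; apply: ustr.
Qed.

Lemma iter_inv l : (l <= #|D|)%N -> forall M A rv,
  iter l (tri_stage L) (D, A0, r) = (M, A, rv) -> Inv M A /\ #|M| = (#|D| - l)%N.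
Proof.
elim: l => [|l IH] Hl M A rv /=.
  by case=> <- <- _; rewrite subn0; split => //; apply: Inv0.
case E: (iter l _ _) => [[M0 A1] rv0] Hs.
have [I0 c0] := IH (ltnW Hl) _ _ _ E.
have Mn0 : M0 != set0.
  by apply/eqP => M0e; move: c0; rewrite M0e cards0 => /esym/eqP; rewrite subn_eq0 leqNgt Hl.
have [I1 c1] := Inv_step I0 Mn0 Hs.
by split => //; rewrite c1 c0 subnS.
Qed.

Lemma iter_eq v th : EqInv v th A0 r -> forall l M A rv,
  iter l (tri_stage L) (D, A0, r) = (M, A, rv) -> M \subset D /\ EqInv v th A rv.
Proof.
move=> H0; elim => [|l IH] M A rv /=; first by case=> <- <- <-.
case E: (iter l _ _) => [[M0 A1] rv0] Hs.
have [MD Hq] := IH _ _ _ E.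
exact: (Eq_step MD Hq Hs).
Qed.

Lemma tri_final A rv : triangularize L D q r = (A, rv) ->
  (forall x, x \in D -> A x x = 1 /\ forall y, y \in D -> (L y < L x)%N -> A x y = 0) /\
  (forall v th, (forall y, y \in D -> (L y <= th)%N ->
       \sum_(z in D) ((y == z)%:R - q y z) * v z = r y) ->
   forall x, x \in D -> (L x <= th)%N -> \sum_(z in D) A x z * v z = rv x).
Proof.
rewrite /triangularize -/A0.
case E: (iter _ _ _) => [[M A1] rv1] [<- <-].
split.
  have [[_ I2 _ _ _] c] := iter_inv (leqnn _) E.
  rewrite subnn in c; have M0 := cards0_eq c.
  by move=> x xD; apply: I2 => //; rewrite M0 inE.
move=> v th H.
have [_ Hq] := iter_eq (th := th) (v := v) H E.
exact: Hq.
Qed.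
End Iter.
End Tri.

Lemma fin_unif (X : finType) (P : X -> nat -> Prop) :
  (forall x, exists N0, forall m, (N0 <= m)%N -> P x m) ->
  exists N0, forall x m, (N0 <= m)%N -> P x m.
Proof.
move=> H.
pose f x := proj1_sig (constructive_indefinite_description _ (H x)).
exists (\max_(x : X) f x)%N => x m Hm.
have := proj2_sig (constructive_indefinite_description _ (H x)); apply.
by apply: leq_trans Hm; apply: (leq_bigmax_cond x).
Qed.

Section Trans.
Variable R : archiRealFieldType.

Lemma pow_nn n (Q : 'M[R]_n) : (forall a c, 0 <= Q a c) ->
  forall m a c, 0 <= (Q ^+ m) a c.
Proof.
move=> H; elim => [|m IH] a c.
  by rewrite expr0 mxE; case: (a == c).
rewrite exprS -mulmxE mxE; apply: sumr_ge0 => k _; apply: mulr_ge0 => //.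
Qed.

Lemma geom n (Q : 'M[R]_n) m :
  Q * (\sum_(l < m) Q ^+ l) + 1 = \sum_(l < m) Q ^+ l + Q ^+ m.
Proof.
elim: m => [|m IH]; first by rewrite big_ord0 mulr0 add0r.
rewrite big_ord_recr /= mulrDr -addrAC IH -exprS.
done. Qed.

Variable T : finType.

Lemma trans_u (D : {set T}) (q : T -> T -> R) :
  (forall x y, x \in D -> y \in D -> 0 <= q x y) ->
  transient (restr_mx D q) ->
  exists u : T -> R, (forall x, x \in D -> 0 < u x) /\
    forall x, x \in D -> \sum_(y in D) q x y * u y < u x.
Proof.
move=> qnn Htr.
case: (pickP (mem D)) => [x0 x0D|D0]; last first.
  by exists (fun _ => 1); split => x; move: (D0 x) => /= ->.
set n := #|D|.
set Qd := restr_mx D q.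
have Qnn : forall a c, 0 <= Qd a c.
  by move=> a c; rewrite mxE; apply: qnn; apply: enum_valP.
set eps : R := (n%:R + 1)^-1.
have epos : 0 < eps by rewrite invr_gt0 ltr_wpDl.
have [N0 HN] := fin_unif (P := fun (ac : 'I_n * 'I_n) m => `|(Qd ^+ m) ac.1 ac.2| < eps)
  (fun ac => Htr ac.1 ac.2 eps epos).
set m := N0.+1.
set one := const_mx 1 : 'cV[R]_n.
set P := \sum_(l < m) Qd ^+ l.
set U0 := P *m one.
have U0ge1 : forall a, 1 <= U0 a 0.
  move=> a; rewrite /U0 /P mxE.
  have -> : \sum_j (\sum_(l < m) Qd ^+ l) a j * one j 0 =
            \sum_j \sum_(l < m) (Qd ^+ l) a j.
    by apply: eq_bigr => j _; rewrite /one mxE mulr1 summxE.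
  rewrite exchange_big big_ord_recl /= expr0.
  have -> : \sum_j (1%:M : 'M[R]_n) a j = 1.
    rewrite (bigD1 a) //= mxE eqxx big1 ?addr0 // => j ja.
    by rewrite mxE eq_sym (negbTE ja).
  rewrite lerDl; apply: sumr_ge0 => l _; apply: sumr_ge0 => j _; exact: pow_nn.
have QU : forall a, (Qd *m U0) a 0 = U0 a 0 - 1 + \sum_c (Qd ^+ m) a c.
  move=> a.
  have : Qd *m U0 + one = U0 + Qd ^+ m *m one.
    have E0 := congr1 (fun M => M *m one) (geom Qd m).
    rewrite /= !mulmxDl -mulmxA mul1mx in E0.
    by rewrite /U0; exact E0.
  move=> /matrixP /(_ a 0) E.
  have e1 : (Qd *m U0 + one) a 0 = (Qd *m U0) a 0 + 1.
    by rewrite [(_ + _ : 'cV[R]_n) a 0]mxE [one a 0]mxE.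
  have e2 : (U0 + Qd ^+ m *m one) a 0 = U0 a 0 + \sum_c (Qd ^+ m) a c.
    rewrite [(_ + _ : 'cV[R]_n) a 0]mxE [(_ *m one) a 0]mxE; congr (_ + _).
    rewrite mxE; by apply: eq_bigr => c _; rewrite mxE mulr1.
  rewrite e1 e2 in E; lra.
have Qm : forall a, \sum_c (Qd ^+ m) a c < 1.
  move=> a; apply: (le_lt_trans (y := \sum_(c < n) eps)).
    apply: ler_sum => c _; apply: le_trans (ltW (HN (a, c) m (leqnSn _))).
    exact: ler_norm.
  rewrite sumr_const card_ord /eps -[_ *+ n]mulr_natr mulrC.
  rewrite ltr_pdivrMr ?ltr_wpDl // mul1r; lra.
exists (fun x => U0 (enum_rank_in x0D x) 0); split.
  move=> x _; apply: lt_le_trans (U0ge1 _); exact: ltr01.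
move=> x xD.
rewrite (big_enum_val (A := mem D)) /=.
have := QU (enum_rank_in x0D x); rewrite mxE => E.
have -> : \sum_(i < #|mem D|) q x (enum_val i) * U0 (enum_rank_in x0D (enum_val i)) 0
   = \sum_j Qd (enum_rank_in x0D x) j * U0 j 0.
  apply: eq_bigr => j _; rewrite enum_valK_in; congr (_ * _); by rewrite /Qd /restr_mx mxE enum_rankK_in.
move: E; have := Qm (enum_rank_in x0D x); lra.
Qed.
End Trans.

Section Ker.
Variable R : archiRealFieldType.

Lemma ker_unit n (A : 'M[R]_n) :
  (forall w : 'cV_n, A *m w = 0 -> w = 0) -> A \in unitmx.
Proof.
move=> H; rewrite -unitmx_tr -row_free_unit; apply: inj_row_free => v Hv.
have : A *m v^T = 0 by rewrite -(trmxK A) -trmx_mul Hv trmx0.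
by move/H => /(congr1 trmx); rewrite trmxK trmx0.
Qed.

Lemma ker_entry n (Q : 'M[R]_n) (w : 'cV_n) : (1%:M - Q) *m w = 0 ->
  forall a, w a 0 = \sum_c Q a c * w c 0.
Proof.
rewrite mulmxBl mul1mx => /matrixP H a; move: (H a 0).
rewrite !mxE => /eqP; rewrite subr_eq0 => /eqP ->; done.
Qed.

Lemma kerP n (Q : 'M[R]_n) (phi : 'I_n -> nat) :
  (forall a c, Q a c != 0 -> (phi c < phi a)%N) -> (1%:M - Q) \in unitmx.
Proof.
move=> Hp; apply: ker_unit => w /ker_entry Hw.
have H : forall m a, (phi a <= m)%N -> w a 0 = 0.
  elim=> [|m IH] a Ha; rewrite Hw big1 // => c _;
    have [->|Qn] := eqVneq (Q a c) 0; rewrite ?mul0r //.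
    by exfalso; move: Ha; have := Hp a c Qn; lia.
  by rewrite IH ?mulr0 //; move: Ha; have := Hp a c Qn; lia.
by apply/matrixP => a j; rewrite ord1 mxE (H (phi a)).
Qed.

Lemma kerU n (Q : 'M[R]_n) (U : 'cV[R]_n) :
  (forall a c, 0 <= Q a c) -> (forall a, 0 < U a 0) ->
  (forall a, \sum_c Q a c * U c 0 < U a 0) -> (1%:M - Q) \in unitmx.
Proof.
move=> Qnn Upos Ustr; apply: ker_unit => w /ker_entry Hw.
apply/matrixP => i j; rewrite ord1 mxE.
set F := fun a => `|w a 0| / U a 0.
set a := [arg max_(a > i) F a]%O.
have Fa : forall c, F c <= F a.
  by move=> c; rewrite /a; case: arg_maxP => // k _ Hk; apply: Hk.
set lam := F a.
have lam0 : 0 <= lam by rewrite /lam /F divr_ge0 // ltW.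
have wc : forall c, `|w c 0| <= lam * U c 0.
  move=> c; have := Fa c; rewrite /F ler_pdivrMr //.
have wa : `|w a 0| = lam * U a 0 by rewrite /lam /F divfK // gt_eqF.
have : lam * U a 0 <= lam * \sum_c Q a c * U c 0.
  rewrite -wa Hw mulr_sumr; apply: le_trans (ler_norm_sum _ _ _) _.
  apply: ler_sum => c _; rewrite normrM ger0_norm // mulrCA.
  by apply: ler_wpM2l.
have := Ustr a => h1 h2.
have lamz : lam = 0.
  apply/eqP; rewrite eq_le lam0 andbT.
  have : lam * (U a 0 - \sum_c Q a c * U c 0) <= 0 by rewrite mulrBr subr_le0.
  by rewrite pmulr_lle0 // subr_gt0.
by apply/eqP; rewrite -normr_eq0 eq_le normr_ge0 andbT; have := wc i; rewrite lamz mul0r.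
Qed.
End Ker.

Section MS.
Variables (R : archiRealFieldType) (K : nat) (N : finType) (b : N -> 'I_K).
Local Notation ms := (multistates b).
Local Notation msv a := (enum_val (A := mem ms) a).

Definition upd (s : {ffun 'I_K -> N}) (k : 'I_K) (z : N) : {ffun 'I_K -> N} :=
  [ffun k' => if k' == k then z else s k'].

Lemma ms_b s k : s \in ms -> b (s k) = k.
Proof. by rewrite inE => /forallP /(_ k) /eqP. Qed.

Lemma updE s k z k' : upd s k z k' = if k' == k then z else s k'.
Proof. by rewrite ffunE. Qed.

Lemma upd_ms s k z : s \in ms -> b z = k -> upd s k z \in ms.
Proof.
move=> sms bz; rewrite inE; apply/forallP => k'; rewrite updE.
by have [->|_] := eqVneq k' k; [rewrite bz | rewrite ms_b].
Qed.

Lemma upd_id s k : upd s k (s k) = s.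
Proof. by apply/ffunP => k'; rewrite updE; case: eqP => [->|]. Qed.

Lemma upd_upd s k y z : upd (upd s k y) k z = upd s k z.
Proof. by apply/ffunP => k'; rewrite !updE; case: eqP. Qed.

Lemma upd_at s k z : upd s k z k = z.
Proof. by rewrite updE eqxx. Qed.

Lemma agree_upd (t s : {ffun 'I_K -> N}) k :
  [forall k', (k' != k) ==> (t k' == s k')] -> t = upd s k (t k).
Proof.
move/forallP => H; apply/ffunP => k'; rewrite updE.
by case: eqP => [->//|/eqP nk]; move: (H k'); rewrite nk => /eqP.
Qed.

Lemma upd_agree s k z : [forall k', (k' != k) ==> (upd s k z k' == s k')].
Proof. by apply/forallP => k'; rewrite updE; have [->|_] := eqVneq k' k; rewrite ?eqxx. Qed.

Lemma sum_ms s k (F : N -> {ffun 'I_K -> N} -> R) : s \in ms ->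
  \sum_(c < #|ms|) (if [forall k', (k' != k) ==> (msv c k' == s k')]
                    then F (msv c k) (msv c) else 0)
  = \sum_(z in bandit_states b k) F z (upd s k z).
Proof.
move=> sms.
transitivity (\sum_(t in ms) (if [forall k', (k' != k) ==> (t k' == s k')]
                    then F (t k) t else 0)).
  by rewrite (big_enum_val (A := mem ms)).
transitivity (\sum_(t in ms) \sum_(z in bandit_states b k)
                 (if t == upd s k z then F z (upd s k z) else 0)).
  apply: eq_bigr => t tms; case: ifP => ag.
    rewrite (bigD1 (t k)) /=; last by rewrite inE ms_b.
    rewrite -(agree_upd ag) eqxx big1 ?addr0 // => z /andP[_ zt].
    case: eqP => // E; exfalso; move/negP: zt; apply.
    by rewrite E upd_at.
  rewrite big1 // => z _; case: eqP => // E; exfalso.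
  by move: ag; rewrite E upd_agree.
rewrite exchange_big /=; apply: eq_bigr => z; rewrite inE => /eqP zD.
rewrite (bigD1 (upd s k z)) /=; last by apply: upd_ms.
by rewrite eqxx big1 ?addr0 // => t /andP[_ tn]; rewrite (negbTE tn).
Qed.

Variable L : option N -> nat.
Hypothesis Linj : injective L.
Variable k0 : 'I_K.

Lemma prio_min (s : {ffun 'I_K -> N}) k' :
  (L (Some (s (priority L k0 s))) <= L (Some (s k')))%N.
Proof. by rewrite /priority; case: arg_minnP => // k _ H; apply: H. Qed.

Lemma prio_upd s y : s \in ms -> b y = priority L k0 s ->
  (L (Some y) <= L (Some (s (priority L k0 s))))%N ->
  priority L k0 (upd s (priority L k0 s) y) = priority L k0 s.
Proof.
move=> sms hby Hy; set k := priority L k0 s.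
set k' := priority L k0 (upd s k y).
have h1 := prio_min (upd s k y) k; rewrite -/k' upd_at in h1.
have [//|nk] := eqVneq k' k.
rewrite updE (negbTE nk) in h1.
have h2 := prio_min s k'; rewrite -/k in h2.
have e : L (Some (s k')) = L (Some (s k)) by apply/eqP; rewrite eqn_leq h2 (leq_trans h1 Hy).
move/Linj: e => [] /(congr1 b); rewrite !ms_b // => E.
Qed.

End MS.

Section Main.
Variables (R : archiRealFieldType) (K : nat) (N : finType) (b : N -> 'I_K).
Local Notation ms := (multistates b).
Local Notation msv a := (enum_val (A := mem ms) a).

Lemma sumQ (qf : N -> N -> R) delta (W : 'cV[R]_#|ms|) x0 (h0 : x0 \in ms) a (sA : msv a \in ms) :
  \sum_c polQ b qf delta a c * W c 0 =
  \sum_(z in bandit_states b (delta (msv a)))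
     qf (msv a (delta (msv a))) z * W (enum_rank_in h0 (upd (msv a) (delta (msv a)) z)) 0.
Proof.
rewrite -(sum_ms (delta (msv a)) (fun z t => qf (msv a (delta (msv a))) z * W (enum_rank_in h0 t) 0) sA).
apply: eq_bigr => c _; rewrite mxE /=; case: ifP => _; rewrite ?mul0r //.
by rewrite enum_valK_in.
Qed.

Lemma sum_delta (D : {set N}) y (X v : N -> R) : y \in D ->
  \sum_(z in D) ((y == z)%:R - X z) * v z = v y - \sum_(z in D) X z * v z.
Proof.
move=> yD.
rewrite (eq_bigr (fun z => (y == z)%:R * v z - X z * v z)); last first.
  by move=> z _; rewrite mulrBl.
rewrite big_split sumrN /= (big_setD1 y) //= eqxx mul1r big1 ?addr0 // => z.
by rewrite !inE => /andP[zy _]; rewrite eq_sym (negbTE zy) mul0r.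
Qed.

End Main.
Local Notation MSV b a := (enum_val (A := mem (multistates b)) a).

Unset Implicit Arguments.
Theorem proposition3p3 (R : archiRealFieldType) (K : nat) (hK : (0 < K)%N)
    (N : finType) (b : N -> 'I_K)
    (hne : forall k : 'I_K, exists i : N, b i = k)
    (q : N -> N -> R) (r : N -> R) (L : option N -> nat) :
  hypC b q r -> labeling L ->
  let pi := priority L (Ordinal hK) in
  (1%:M - polQ b (fin_q b L q r) pi) \in unitmx /\
  polV b (fin_q b L q r) (fin_r b L q r) pi = polV b q r pi.
Proof.
move=> [qnn [qtr _]] [Linj [Lb _]] pi.
have qnnk : forall k x y, x \in bandit_states b k -> y \in bandit_states b k -> 0 <= q x y.
  by move=> k x y; rewrite !inE => /eqP bx /eqP byy; apply: qnn; rewrite bx byy.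
have Hu : forall k, exists u : N -> R, (forall x, x \in bandit_states b k -> 0 < u x) /\
    forall x, x \in bandit_states b k -> \sum_(y in bandit_states b k) q x y * u y < u x.
  by move=> k; apply: trans_u => //; apply: qnnk.
pose ue k := proj1_sig (constructive_indefinite_description _ (Hu k)).
have ueP k := proj2_sig (constructive_indefinite_description _ (Hu k)).
pose u x := ue (b x) x.
have inb : forall x, x \in bandit_states b (b x) by move=> x; rewrite inE.
have upos : forall x, 0 < u x by move=> x; apply: (ueP (b x)).1.
have ustr : forall k x, x \in bandit_states b k ->
    \sum_(y in bandit_states b k) q x y * u y < u x.
  move=> k x; rewrite inE => /eqP bx.
  rewrite /u bx; have := (ueP k).2 x; rewrite inE bx eqxx => /(_ isT) H.
  apply: le_lt_trans H; rewrite le_eqVlt; apply/orP; left; apply/eqP.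
  by apply: eq_bigr => y; rewrite inE => /eqP ->.
have TF := fun i A rv (E : triangularize (fun x => L (Some x)) (bandit_states b (b i)) q r = (A, rv)) =>
  tri_final (u := u) (fun x _ => upos x) (qnnk (b i)) (ustr (b i)) E.
have msA : forall a, MSV b a \in multistates b by move=> a; apply: enum_valP.
have UQ : (1%:M - polQ b q pi) \in unitmx.
  apply: (kerU (U := \col_a \prod_k u (MSV b a k))).
  - move=> a c; rewrite mxE /=; case: ifP => ag //.
    by apply: qnn; rewrite !ms_b.
  - by move=> a; rewrite mxE; apply: prodr_gt0 => k _; exact: upos.
  - move=> a; rewrite (sumQ q pi _ (msA a) (msA a)).
    set s := MSV b a; set k := pi s.
    have E1 : forall z, z \in bandit_states b k ->
       (\col_a0 \prod_k0 u (MSV b a0 k0)) (enum_rank_in (msA a) (upd s k z)) 0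
         = u z * \prod_(k' | k' != k) u (s k').
      move=> z; rewrite inE => /eqP bz; rewrite mxE enum_rankK_in; last by apply: upd_ms => //; apply: msA.
      rewrite (bigD1 k) //= upd_at; congr (_ * _); apply: eq_bigr => k' nk.
      by rewrite updE (negbTE nk).
    under eq_bigr => z zD do rewrite E1 // mulrA.
    rewrite -mulr_suml mxE [X in _ < X](bigD1 k) //= -/s ltr_pM2r; last first.
      by apply: prodr_gt0 => k' _; exact: upos.
    by apply: ustr; rewrite inE ms_b //; apply: msA.
set W := polV b q r pi.
have EWm : (1%:M - polQ b q pi) *m W = polR b r pi by rewrite /W /polV mulKVmx.
have EW : forall a, W a 0 - \sum_c polQ b q pi a c * W c 0 = r (MSV b a (pi (MSV b a))).
  move=> a; move/matrixP: EWm => /(_ a 0).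
  by rewrite mulmxBl mul1mx [(_ - _ : 'cV_ _) a 0]mxE [(- _ : 'cV_ _) a 0]mxE [(_ *m W) a 0]mxE [polR _ _ _ a 0]mxE.
have Wt : forall a, W a 0 - \sum_c polQ b (fin_q b L q r) pi a c * W c 0
                  = fin_r b L q r (MSV b a (pi (MSV b a))).
  move=> a; have sA := msA a; set s := MSV b a in sA *; set k := pi s.
  set i := s k; have bi : b i = k by apply: ms_b.
  pose v z := W (enum_rank_in sA (upd s k z)) 0.
  rewrite (sumQ _ pi W sA (msA a)) -/s -/k.
  case E: (triangularize (fun x => L (Some x)) (bandit_states b (b i)) q r) => [A rv].
  have [F1 F2] := TF i A rv E.
  rewrite /fin_q /fin_r E /=.
  rewrite bi in F1 F2.
  have iD : i \in bandit_states b k by rewrite inE bi.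
  rewrite (sum_delta (A i) v iD).
  have vi : v i = W a 0 by rewrite /v /i upd_id enum_valK_in.
  have Hyp : forall y, y \in bandit_states b k -> (L (Some y) <= L (Some i))%N ->
      \sum_(z in bandit_states b k) ((y == z)%:R - q y z) * v z = r y.
    move=> y yD Ly; rewrite sum_delta //.
    have hby : b y = k by move: yD; rewrite inE => /eqP.
    set t := upd s k y.
    have tA : t \in multistates b by apply: upd_ms.
    have pt : pi t = k by apply: (prio_upd Linj sA hby Ly).
    have := EW (enum_rank_in sA t).
    rewrite (sumQ q pi W sA (msA _)) enum_rankK_in // pt /t upd_at.
    by under eq_bigr => z _ do rewrite upd_upd.
  have := F2 v (L (Some i)) Hyp i iD (leqnn _).
  rewrite -vi; lra.
pose Phi (s : {ffun 'I_K -> N}) := (\sum_(k < K) L (Some (s k)))%N.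
pose B := (\sum_(k < K) #|N|.+1)%N.
have PhiB : forall s, (Phi s <= B)%N.
  by move=> s; apply: leq_sum => k _; case/andP: (Lb (Some (s k))).
have PhiU : forall s k j, (Phi (upd s k j) + L (Some (s k)) = Phi s + L (Some j))%N.
  move=> s0 k j; rewrite /Phi (bigD1 k) // [in RHS](bigD1 k) //= upd_at.
  have -> : (\sum_(k' < K | k' != k) L (Some (upd s0 k j k')) =
             \sum_(k' < K | k' != k) L (Some (s0 k')))%N.
    by apply: eq_bigr => k' nk; rewrite updE (negbTE nk).
  rewrite addnAC [RHS]addnAC; congr (_ + _); first exact: addnC.
have UQt : (1%:M - polQ b (fin_q b L q r) pi) \in unitmx.
  apply: (kerP (phi := fun a => (B - Phi (MSV b a))%N)) => a c.
  rewrite mxE /=; set s := MSV b a; set t := MSV b c; set k := pi s.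
  case: ifP => ag; last by rewrite eqxx.
  move=> nz; set i := s k; set j := t k.
  have bi : b i = k by apply: ms_b; apply: msA.
  have bj : b j = k by apply: ms_b; apply: msA.
  have te : t = upd s k j := agree_upd ag.
  case E: (triangularize (fun x => L (Some x)) (bandit_states b (b i)) q r) => [A rv].
  have [F1 _] := TF i A rv E.
  move: nz; rewrite /fin_q E /= => nz.
  have iD : i \in bandit_states b (b i) by rewrite inE.
  have jD : j \in bandit_states b (b i) by rewrite inE bi bj.
  have Lij : (L (Some i) < L (Some j))%N.
    rewrite ltnNge; apply/negP => Hle; move/negP: nz; apply.
    rewrite leq_eqVlt in Hle; case/orP: Hle => [/eqP Hl|Hl].
      move/Linj: Hl => [] ji; by rewrite -/i -/j ji eqxx (F1 i iD).1 subrr.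
    have ij : (i == j) = false.
      by apply/negbTE; apply/eqP => e; move: Hl; rewrite e ltnn.
    by rewrite -/i -/j ij ((F1 i iD).2 j jD Hl) subrr.
  have := PhiU s k j; rewrite -te -/i => HP.
  have := PhiB t; lia.
split => //.
have EWt : (1%:M - polQ b (fin_q b L q r) pi) *m W = polR b (fin_r b L q r) pi.
  apply/matrixP => a jj; rewrite ord1.
  rewrite mulmxBl mul1mx [(_ - _ : 'cV_ _) a 0]mxE [(- _ : 'cV_ _) a 0]mxE.
  by rewrite [(_ *m W) a 0]mxE [polR _ _ _ a 0]mxE Wt.
by rewrite /polV -EWt mulKmx.
Qed.
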